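(* Let $\mathbb{I}$ be a finite list of implementations and $\mathbb{M}_0$ a finite set of pairwise inequivalent FSMs such that every $\mathcal{I}\in\mathbb{I}$ is equivalent to some model in $\mathbb{M}_0$. Executing $\textsc{IncrementalFingerprinting}_{\mathcal{C}}(\mathbb{I},\mathbb{M}_0)$ returns $\mathbb{M}$ and $\mu$ such that $\mathbb{M}=\mathbb{M}_0$ and, for every $\mathcal{I}\in\mathbb{I}$ and every $\mathcal{M}\in\mathbb{M}$, $\mu(\mathcal{I})=\mathcal{M}$ iff $\mathcal{I}\sim\mathcal{M}$.
   Context: Fix finite sets $I$ (inputs) and $O$ (outputs). An FSM is $(Q,q_0,\delta,\lambda)$ with $\delta:Q\times I\to Q$, $\lambda:Q\times I\to O$ extended to input words; $\lambda(w)=\lambda(q_0,w)$. For $L\subseteq I^*$, $\mathcal{M}_0\sim_L\mathcal{M}_1$ means $\lambda^{\mathcal{M}_0}(w)=\lambda^{\mathcal{M}_1}(w)$ for all $w\in L$; $\sim$ means $\sim_{I^*}$. Implementations are black-box FSMs. A fingerprint for a set $\mathbb{M}$ is a set of words containing a separating word for every pair of non-equivalent models of $\mathbb{M}$, each word separating some pair. Component contracts: (i) $\textsc{Fingerprinting}_{\mathcal{C}}(\mathcal{I},\mathbb{M})$ executes a subset $L_F$ of a fingerprint for $\mathbb{M}$ and returns $L_F$ and $\mathcal{M}$ if $\mathcal{M}\in\mathbb{M}$ is the only model with $\mathcal{I}\sim_{L_F}\mathcal{M}$, else $L_F$ and None; when $\mathcal{I}$ is equivalent to some model of $\mathbb{M}$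 (closed world), it returns exactly one model. (ii) $\textsc{ConfQuery}_{\mathcal{C}}(\mathcal{I},\mathcal{M})$ returns $(b,L_{CQ})$ with $b$ true iff $\mathcal{I}\sim_{L_{CQ}}\mathcal{M}$. (iii) $\textsc{Learn}_{\mathcal{C}}(\mathcal{I},\mathbb{M},L_F)$ returns $(\mathcal{M},L_L)$ with $\mathcal{I}\sim_{L_F\cup L_L}\mathcal{M}$. $\textsc{IdentifyOrLearn}_{\mathcal{C}}(\mathcal{I},\mathbb{M})$: if $\mathbb{M}=\emptyset$ return $\textsc{Learn}_{\mathcal{C}}(\mathcal{I},\mathbb{M},\emptyset)$; else $(\mathcal{M},L_F)=\textsc{Fingerprinting}_{\mathcal{C}}(\mathcal{I},\mathbb{M})$; if $\mathcal{M}\neq$ None, $(b,L_{CQ})=\textsc{ConfQuery}_{\mathcal{C}}(\mathcal{I},\mathcal{M})$, $L_F:=L_F\cup L_{CQ}$, and if $b$ return $(\mathcal{M},L_F)$; then $(\mathcal{M},L_L)=\textsc{Learn}_{\mathcal{C}}(\mathcal{I},\mathbb{M},L_F)$ and return $(\mathcal{M},L_F\cup L_L)$. $\textsc{IncrementalFingerprinting}_{\mathcal{C}}(\mathbb{I},\mathbb{M}_0)$: set $\mathbb{M}:=\mathbb{M}_0$; for each $\mathcal{I}\in\mathbb{I}$ in order, let $(\mathcal{M},L)=\textsc{IdentifyOrLearn}_{\mathcal{C}}(\mathcal{I},\mathbb{M})$, set $\mathbb{M}:=\mathbb{M}\cup\{\mathcal{M}\}$, $\gamma(\mathcal{I}):=L$,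 $\mu(\mathcal{I}):=\mathcal{M}$; return $\mathbb{M},\gamma,\mu$. *)

(* Defs.v *)
From mathcomp Require Import all_boot.
From Stdlib Require List.
Set Implicit Arguments. Unset Strict Implicit. Unset Printing Implicit Defensive.

Section FSMs.
Variables (I O : finType).

Record fsm := FSM {
  state : finType;
  init : state;
  delta : state -> I -> state;
  lam : state -> I -> O }.

Fixpoint lam_from (M : fsm) (q : state M) (w : seq I) : seq O :=
  match w with
  | [::] => [::]
  | a :: w' => lam q a :: lam_from (delta q a) w'
  end.

Definition out (M : fsm) (w : seq I) : seq O := lam_from (init M) w.

Definition equiv_on (L : seq I -> Prop) (M1 M2 : fsm) : Prop :=
  forall w, L w -> out M1 w = out M2 w.

Definition fsm_equiv (M1 M2 : fsm) : Prop := equiv_on (fun _ => True) M1 M2.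

(* ~_L for a finite, explicitly executed set of words *)
Definition equiv_list (L : seq (seq I)) (M1 M2 : fsm) : Prop :=
  equiv_on (fun w => w \in L) M1 M2.

Definition separates (w : seq I) (M1 M2 : fsm) : Prop := out M1 w <> out M2 w.

Definition is_fingerprint (F : seq I -> Prop) (Ms : list fsm) : Prop :=
  (forall M1 M2, List.In M1 Ms -> List.In M2 Ms -> ~ fsm_equiv M1 M2 ->
     exists w, F w /\ separates w M1 M2) /\
  (forall w, F w -> exists M1 M2,
     List.In M1 Ms /\ List.In M2 Ms /\ separates w M1 M2).

Definition pairwise_inequiv (Ms : list fsm) : Prop :=
  forall M1 M2, List.In M1 Ms -> List.In M2 Ms -> M1 <> M2 -> ~ fsm_equiv M1 M2.

Definition unique_match (Imp : fsm) (Ms : list fsm) (L : seq (seq I)) (M : fsm) :=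
  List.In M Ms /\ equiv_list L Imp M /\
  (forall M', List.In M' Ms -> equiv_list L Imp M' -> M' = M).

Definition fingerprinting_spec
    (Fp : fsm -> list fsm -> seq (seq I) * option fsm) : Prop :=
  forall Imp Ms,
    let (LF, r) := Fp Imp Ms in
    (exists F, is_fingerprint F Ms /\ forall w, w \in LF -> F w) /\
    (forall M, r = Some M <-> unique_match Imp Ms LF M) /\
    (r = None <-> ~ exists M, unique_match Imp Ms LF M) /\
    (pairwise_inequiv Ms -> (exists M, List.In M Ms /\ fsm_equiv Imp M) ->
       exists M, r = Some M).

Definition confquery_spec (CQ : fsm -> fsm -> bool * seq (seq I)) : Prop :=
  forall Imp M, let (b, LCQ) := CQ Imp M in b = true <-> equiv_list LCQ Imp M.

Definition learn_spec
    (Ln : fsm -> list fsm -> seq (seq I) -> fsm * seq (seq I)) : Prop :=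
  forall Imp Ms LF, let (M, LL) := Ln Imp Ms LF in equiv_list (LF ++ LL) Imp M.

Section Algo.
Variables (Fp : fsm -> list fsm -> seq (seq I) * option fsm)
          (CQ : fsm -> fsm -> bool * seq (seq I))
          (Ln : fsm -> list fsm -> seq (seq I) -> fsm * seq (seq I)).

Definition identify_or_learn (Imp : fsm) (Ms : list fsm) : fsm * seq (seq I) :=
  match Ms with
  | [::] => Ln Imp Ms [::]
  | _ =>
    let (LF, r) := Fp Imp Ms in
    let learn (LF0 : seq (seq I)) :=
      let (M', LL) := Ln Imp Ms LF0 in (M', LF0 ++ LL) in
    match r with
    | Some M =>
      let (b, LCQ) := CQ Imp M in
      if b then (M, LF ++ LCQ) else learn (LF ++ LCQ)
    | None => learn LF
    end
  end.

(* Returns the final set of models and, for each implementation of the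
   input list (in order), the triple (I, gamma(I), mu(I)).
   M ∪ {M'} is represented by M' :: M (sets are read via List.In). *)
Fixpoint incremental_fingerprinting (Is : list fsm) (Ms : list fsm)
  : list fsm * list (fsm * seq (seq I) * fsm) :=
  match Is with
  | [::] => (Ms, [::])
  | Imp :: Is' =>
    let (M, L) := identify_or_learn Imp Ms in
    let (Ms', log) := incremental_fingerprinting Is' (M :: Ms) in
    (Ms', (Imp, L, M) :: log)
  end.
End Algo.
End FSMs.

(* Main.v *)
Require Import Defs.
From mathcomp Require Import all_boot.
From Stdlib Require List.
From Stdlib Require Import Classical.

Lemma equiv_trans {I O : finType} {A B C : fsm I O} :
  fsm_equiv A B -> fsm_equiv A C -> fsm_equiv B C.
Proof. move=> h1 h2 w _; rewrite -(h1 w Logic.I) (h2 w Logic.I) //. Qed.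

Lemma iol_ok (I O : finType)
    (Fp : fsm I O -> list (fsm I O) -> seq (seq I) * option (fsm I O))
    (CQ : fsm I O -> fsm I O -> bool * seq (seq I))
    (Ln : fsm I O -> list (fsm I O) -> seq (seq I) -> fsm I O * seq (seq I)) :
  fingerprinting_spec Fp -> confquery_spec CQ ->
  forall Imp Ms, pairwise_inequiv Ms ->
  (exists M, List.In M Ms /\ fsm_equiv Imp M) ->
  List.In (identify_or_learn Fp CQ Ln Imp Ms).1 Ms /\
  fsm_equiv Imp (identify_or_learn Fp CQ Ln Imp Ms).1.
Proof.
move=> hF hC Imp Ms hpw hex.
case: Ms hpw hex => [|M1 Ms1] hpw hex.
  by case: hex => M [].
rewrite /identify_or_learn.
set Ms := M1 :: Ms1 in hpw hex *.
have := hF Imp Ms.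
case: (Fp Imp Ms) => LF r [_ [hsome [_ hcw]]].
case: (hcw hpw hex) => M hr; subst r.
have [hin [hLF huniq]] := (proj1 (hsome M) erefl).
case: hex => M' [hM' heq].
have eM : M' = M by apply: huniq => // w _; exact: heq.
subst M'.
have := hC Imp M.
case: (CQ Imp M) => b LCQ hb.
have -> : b = true by apply/hb => w _; exact: heq.
by split.
Qed.

Theorem theorem3 (I O : finType)
    (Fp : fsm I O -> list (fsm I O) -> seq (seq I) * option (fsm I O))
    (CQ : fsm I O -> fsm I O -> bool * seq (seq I))
    (Ln : fsm I O -> list (fsm I O) -> seq (seq I) -> fsm I O * seq (seq I)) :
  fingerprinting_spec Fp -> confquery_spec CQ -> learn_spec Ln ->
  forall (Is M0 : list (fsm I O)),
    pairwise_inequiv M0 ->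
    (forall Imp, List.In Imp Is -> exists M, List.In M M0 /\ fsm_equiv Imp M) ->
    let (Ms, log) := incremental_fingerprinting Fp CQ Ln Is M0 in
    (forall M, List.In M Ms <-> List.In M M0) /\
    List.Forall2
      (fun Imp (e : fsm I O * seq (seq I) * fsm I O) =>
         e.1.1 = Imp /\
         (forall M, List.In M Ms -> (e.2 = M <-> fsm_equiv Imp M)))
      Is log.
Proof.
move=> hF hC hL Is; elim: Is => [|Imp Is IH] M0 hpw hall /=.
  by split => //.
have hex := hall Imp (or_introl erefl).
have [hin heq] := @iol_ok I O Fp CQ Ln hF hC Imp M0 hpw hex.
case: (identify_or_learn Fp CQ Ln Imp M0) hin heq => M L /= hin heq.
have hmem : forall X, List.In X (M :: M0) <-> List.In X M0.
  move=> X; split => [[<-|]|] //=; by right.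
have hpw' : pairwise_inequiv (M :: M0).
  move=> A B /hmem hA /hmem hB; exact: hpw.
have hall' : forall Imp0, List.In Imp0 Is ->
    exists M2, List.In M2 (M :: M0) /\ fsm_equiv Imp0 M2.
  move=> Imp0 h; case: (hall Imp0 (or_intror h)) => M2 [h1 h2].
  by exists M2; split => //; right.
have := IH (M :: M0) hpw' hall'.
case: (incremental_fingerprinting Fp CQ Ln Is (M :: M0)) => Ms log [hMs hF2].
split.
  move=> X; rewrite hMs; exact: hmem.
constructor => //; split => // X /hMs /hmem hX /=; split.
  by move=> <-.
move=> hIX; apply: NNPP => hne.
exact: (hpw M X hin hX hne (equiv_trans heq hIX)).
Qed.
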